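(* Let $\mathbb{F}$ be a field, $\mathcal{C} \subseteq \mathbb{F}^{m \times n}$ a linear code with $k = \dim(\mathcal{C})$, and $p \in \mathbb{Z}$. Define $W_p(\mathcal{C}^\perp) = \{d_{M,p+rm}(\mathcal{C}^\perp) \mid r \in \mathbb{Z}, 1 \leq p + rm \leq mn - k\}$ and $\overline{W}_{p+k}(\mathcal{C}) = \{n + 1 - d_{M,p+k+rm}(\mathcal{C}) \mid r \in \mathbb{Z}, 1 \leq p + k + rm \leq k\}$. Then $\{1,2,\dots,n\} = W_p(\mathcal{C}^\perp) \cup \overline{W}_{p+k}(\mathcal{C})$, and this union is disjoint.
   Context: ${\rm Row}(V)$ is the row space. For a subspace $\mathcal{L} \subseteq \mathbb{F}^n$, $\mathcal{V}_\mathcal{L} = \{V \in \mathbb{F}^{m\times n} \mid {\rm Row}(V) \subseteq \mathcal{L}\}$, and for a linear code $\mathcal{D}$ and $1 \le r \le \dim\mathcal{D}$, $d_{M,r}(\mathcal{D}) = \min\{\dim \mathcal{L} \mid \mathcal{L} \subseteq \mathbb{F}^n \text{ subspace}, \dim(\mathcal{D} \cap \mathcal{V}_\mathcal{L}) \ge r\}$. The dual is $\mathcal{C}^\perp = \{D \in \mathbb{F}^{m\times n} \mid {\rm Trace}(CD^T) = 0 \ \forall C \in \mathcal{C}\}$, of dimension $mn - k$. *)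

(* Defs.v *)
From HB Require Import structures.
From mathcomp Require Import all_boot all_order all_algebra.
From mathcomp Require Import boolp.
Set Implicit Arguments. Unset Strict Implicit. Unset Printing Implicit Defensive.
Import Order.TTheory GRing.Theory Num.Theory.
Local Open Scope ring_scope.
Local Open Scope vspace_scope.

Section Defs.
Variables (F : fieldType) (m n : nat).

Definition rowmap (i : 'I_m) : 'Hom('M[F]_(m, n), 'rV[F]_n) :=
  linfun (fun V : 'M[F]_(m, n) => row i V).

Definition VL (L : {vspace 'rV[F]_n}) : {vspace 'M[F]_(m, n)} :=
  (\bigcap_(i < m) (rowmap i @^-1: L))%VS.

Lemma memVL (L : {vspace 'rV[F]_n}) (V : 'M[F]_(m, n)) :
  (V \in VL L) = [forall i, row i V \in L].
Proof.
apply/idP/forallP => [HV i | /(_ _) HV].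
  have sub := bigcapv_inf i (P := xpredT) (Us := fun i => rowmap i @^-1: L)
             (V := rowmap i @^-1: L) isT (subvv _).
  by have := subvP sub V HV; rewrite -memv_preim lfunE.
rewrite /VL memvE; apply/(subv_bigcapP (P := xpredT)) => i _ /=; rewrite -memvE.
by rewrite -memv_preim lfunE; apply: HV.
Qed.

Definition dM_pred (D : {vspace 'M[F]_(m, n)}) (r : nat) (k : nat) : bool :=
  `[< exists L : {vspace 'rV[F]_n}, \dim L = k /\ (r <= \dim (D :&: VL L))%N >].

(* d_{M,r}(D) = min { dim L | dim (D :&: V_L) >= r }  (0 if no such L,
   which never happens for 1 <= r <= dim D). *)
Definition dM (D : {vspace 'M[F]_(m, n)}) (r : nat) : nat :=
  match pselect (exists k, dM_pred D r k) with
  | left h => ex_minn h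
  | right _ => 0%N
  end.

Definition trform (C : 'M[F]_(m, n)) : 'Hom('M[F]_(m, n), F^o) :=
  linfun (fun D : 'M[F]_(m, n) => (\tr (C *m D^T) : F^o)).

Definition dualcode (C : {vspace 'M[F]_(m, n)}) : {vspace 'M[F]_(m, n)} :=
  (\bigcap_(c <- vbasis C) lker (trform c))%VS.

End Defs.

(* Main.v *)
Require Import Defs.
From HB Require Import structures.
From mathcomp Require Import all_boot all_order all_algebra.
From mathcomp Require Import boolp.
From mathcomp Require Import zify ring.
Set Implicit Arguments. Unset Strict Implicit. Unset Printing Implicit Defensive.
Import Order.TTheory GRing.Theory Num.Theory.
Local Open Scope ring_scope.


Lemma linfunE' (R : fieldType) (aT rT : vectType R) (f : aT -> rT) (hf : linear f) :
  linfun f =1 f.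
Proof.
move=> x. pose g : {linear aT -> rT} := HB.pack f (GRing.isLinear.Build _ _ _ _ f hf).
exact: (lfunE g x).
Qed.

Section Perp.
Variables (F : fieldType) (vT : vectType F) (phi : vT -> 'Hom(vT, F^o)).
Hypothesis phiD : forall x a u v, phi (a *: u + v) x = a * phi u x + phi v x.
Hypothesis phiC : forall u x, phi u x = phi x u.
Hypothesis phiN : forall x, (forall u, phi u x = 0) -> x = 0.

Definition perp (U : {vspace vT}) := (\bigcap_(c <- vbasis U) lker (phi c))%VS.

Lemma mem_bigcap_ker (s : seq vT) x :
  (x \in \bigcap_(c <- s) lker (phi c))%VS = all (fun c => phi c x == 0) s.
Proof.
elim: s => [|c s IH]; first by rewrite big_nil memvf.
by rewrite big_cons memv_cap memv_ker IH.
Qed.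

Lemma phi0 x : phi 0 x = 0.
Proof.
have := phiD x 1 0 0; rewrite scale1r addr0 mul1r.
by move/(congr1 (fun y => y - phi 0 x)); rewrite subrr addrK.
Qed.

Lemma phi_sum (I : Type) (r : seq I) (P : pred I) (f : I -> vT) x :
  phi (\sum_(i <- r | P i) f i) x = \sum_(i <- r | P i) phi (f i) x.
Proof.
elim/big_rec2: _ => [|i a b _ <-]; first exact: phi0.
by have := phiD x 1 (f i) b; rewrite scale1r mul1r.
Qed.

Lemma memperp (U : {vspace vT}) x : reflect (forall u, u \in U -> phi u x = 0) (x \in perp U).
Proof.
apply: (iffP idP).
  rewrite /perp mem_bigcap_ker => /allP H u /coord_vbasis ->.
  rewrite phi_sum big1 // => i _.
  rewrite -[_ *: _]addr0 phiD phi0 addr0 (eqP (H _ _)) ?mulr0 //.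
  by apply: mem_nth; rewrite size_tuple.
move=> H; rewrite /perp mem_bigcap_ker; apply/allP => c hc; apply/eqP/H.
exact: vbasis_mem hc.
Qed.

Lemma perp_sub (U : {vspace vT}) : (U <= perp (perp U))%VS.
Proof.
apply/subvP => u hu; apply/memperp => y /memperp H; rewrite phiC; exact: H.
Qed.

Lemma perpD (U W : {vspace vT}) : perp (U + W) = (perp U :&: perp W)%VS.
Proof.
apply/vspaceP => x; rewrite memv_cap; apply/memperp/andP.
  move=> H; split; apply/memperp => u hu; apply: H.
    exact: (subvP (addvSl U W)).
  exact: (subvP (addvSr U W)).
move=> [/memperp H1 /memperp H2] u /memv_addP [a ha [b hb ->]].
by rewrite -[a]scale1r phiD mul1r H1 // H2 // addr0.
Qed.

Lemma perp_full : perp fullv = 0%VS.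
Proof.
apply/eqP; rewrite -subv0; apply/subvP => x /memperp H; rewrite memv0.
apply/eqP/phiN => u; exact: H _ (memvf u).
Qed.

Lemma dim_ker_ge (f : 'Hom(vT, F^o)) : (\dim (fullv : {vspace vT}) <= (\dim (lker f)).+1)%N.
Proof.
have := limg_ker_dim f fullv; rewrite capfv.
have : (\dim (f @: fullv) <= \dim (fullv : {vspace F^o}))%N by apply: dimvS; apply: subvf.
rewrite dimvf /= => h1 h2. have e1 : dim F^o = 1%N by []. rewrite e1 in h1. lia.
Qed.

Lemma dim_bigcap_ge (s : seq vT) :
  (\dim (fullv : {vspace vT}) <= \dim (\bigcap_(c <- s) lker (phi c)) + size s)%N.
Proof.
elim: s => [|c s IH]; first by rewrite big_nil addn0.
rewrite big_cons /=.
have := dimv_sum_cap (lker (phi c)) (\bigcap_(c <- s) lker (phi c)).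
have := dimvS (subvf (lker (phi c) + \bigcap_(c <- s) lker (phi c))%VS).
have := dim_ker_ge (phi c). lia.
Qed.

Lemma dim_perp_ge (U : {vspace vT}) : (\dim (fullv : {vspace vT}) <= \dim (perp U) + \dim U)%N.
Proof. by have := dim_bigcap_ge (vbasis U); rewrite size_tuple. Qed.

Lemma dim_perp (U : {vspace vT}) : \dim (perp U) = (\dim (fullv : {vspace vT}) - \dim U)%N.
Proof.
have h1 := dim_perp_ge U. have h2 := dim_perp_ge U^C.
have h3 : (perp U :&: perp U^C = 0)%VS by rewrite -perpD addv_complf perp_full.
have := dimv_disjoint_sum h3. have := dimvS (subvf (perp U + perp U^C)%VS).
rewrite dimv_compl in h2. have := dimvS (subvf U). lia.
Qed.

Lemma perpK (U : {vspace vT}) : perp (perp U) = U.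
Proof.
apply/esym/eqP; rewrite eqEdim perp_sub /= !dim_perp.
have := dimvS (subvf U). lia.
Qed.

End Perp.

Section Spec.
Variables (F : fieldType) (m n : nat).

Definition dotf (v : 'rV[F]_n) : 'Hom('rV[F]_n, F^o) :=
  linfun (fun x : 'rV[F]_n => ((v *m x^T) 0 0 : F^o)).

Lemma dotfE v x : dotf v x = (v *m x^T) 0 0.
Proof.
apply: linfunE' => a y z.
by rewrite linearP /= mulmxDr linearZ /= !mxE.
Qed.

Lemma trformE (U D : 'M[F]_(m, n)) : trform U D = \tr (U *m D^T).
Proof.
apply: linfunE' => a y z.
by rewrite linearP /= mulmxDr linearZ /= linearD linearZ.
Qed.

Lemma trE (X D : 'M[F]_(m, n)) : \tr (X *m D^T) = \sum_i \sum_j X i j * D i j.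
Proof.
apply: eq_bigr => i _; rewrite mxE; apply: eq_bigr => j _; by rewrite mxE.
Qed.

Lemma dot_D x a u v : dotf (a *: u + v) x = a * dotf u x + dotf v x.
Proof. by rewrite !dotfE mulmxDl -scalemxAl !mxE. Qed.

Lemma dot_C u x : dotf u x = dotf x u.
Proof.
rewrite !dotfE; have -> : u *m x^T = (x *m u^T)^T by rewrite trmx_mul trmxK.
by rewrite mxE.
Qed.

Lemma dot_N x : (forall u, dotf u x = 0) -> x = 0.
Proof.
move=> H; apply/matrixP => i j; rewrite (ord1 i) !mxE.
by have := H (delta_mx 0 j); rewrite dotfE -rowE !mxE.
Qed.

Lemma tr_D (x : 'M[F]_(m, n)) (a : F) (u v : 'M[F]_(m, n)) : trform (a *: u + v) x = a * trform u x + trform v x.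
Proof. by rewrite !trformE mulmxDl -scalemxAl linearD linearZ. Qed.

Lemma tr_C (u x : 'M[F]_(m, n)) : trform u x = trform x u.
Proof. by rewrite !trformE -mxtrace_tr trmx_mul trmxK. Qed.

Lemma tr_N (x : 'M[F]_(m, n)) : (forall u, trform u x = 0) -> x = 0.
Proof.
move=> H; apply/matrixP => i j; rewrite mxE.
have := H (delta_mx i j); rewrite trformE trE (bigD1 i) //= [X in _ + X]big1 => [|a /negPf na]; last first.
  by rewrite big1 // => b _; rewrite mxE na mul0r.
rewrite addr0 (bigD1 j) //= big1 => [|b /negPf nb]; last first.
  by rewrite mxE nb andbF mul0r.
by rewrite !mxE !eqxx mul1r !addr0.
Qed.

Definition Lp := perp dotf.
Definition P := perp (@trform F m n).

Lemma dualcodeE (C : {vspace 'M[F]_(m, n)}) : dualcode C = P C.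
Proof. by []. Qed.

End Spec.

Section VLlemmas.
Variables (F : fieldType) (m n : nat).
Implicit Types (L : {vspace 'rV[F]_n}).

Lemma VLS L1 L2 : (L1 <= L2)%VS -> (VL m L1 <= VL m L2)%VS.
Proof.
move=> h; apply/subvP => D; rewrite !memVL => /forallP H; apply/forallP => i.
exact: (subvP h _ (H i)).
Qed.

Lemma VL_full : VL m (fullv : {vspace 'rV[F]_n}) = fullv.
Proof.
apply/vspaceP => D; rewrite memVL memvf; apply/forallP => i; exact: memvf.
Qed.

Lemma dim_rV  : \dim (fullv : {vspace 'rV[F]_n}) = n.
Proof. by rewrite dimvf; apply: mul1n. Qed.

Lemma dim_M : \dim (fullv : {vspace 'M[F]_(m, n)}) = (m * n)%N.
Proof. by rewrite dimvf. Qed.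

Definition emb (i : 'I_m) : 'Hom('rV[F]_n, 'M[F]_(m, n)) :=
  linfun (mulmx (delta_mx i (0 : 'I_1) : 'M[F]_(m, 1))).

Lemma sum_emb (D : 'M[F]_(m, n)) : D = \sum_(i < m) delta_mx i 0 *m row i D.
Proof.
apply/matrixP => a b; rewrite summxE (bigD1 a) //= big1 => [|i /negPf ni].
  by rewrite addr0 !mxE big_ord1 !mxE !eqxx mul1r.
by rewrite !mxE big_ord1 !mxE eq_sym ni mul0r.
Qed.

Lemma dim_sum_le (I : finType) (Us : I -> {vspace 'M[F]_(m, n)}) :
  (\dim (\sum_(i : I) Us i)%VS <= \sum_(i : I) \dim (Us i))%N.
Proof.
elim/big_ind2: _ => [|d1 U1 d2 U2 h1 h2|i _] //; first by rewrite dimv0.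
have := dimv_sum_cap U1 U2; lia.
Qed.

Lemma dimVL_le L : (\dim (VL m L) <= m * \dim L)%N.
Proof.
have sub : (VL m L <= \sum_(i < m) (emb i @: L))%VS.
  apply/subvP => D; rewrite memVL => /forallP H.
  rewrite [D]sum_emb; apply: memv_sumr => i _.
  have -> : delta_mx i 0 *m row i D = emb i (row i D) by rewrite lfunE.
  exact: memv_img.
apply: leq_trans (dimvS sub) _; apply: leq_trans (dim_sum_le _) _.
apply: (@leq_trans (\sum_(i < m) \dim L)).
  by apply: leq_sum => i _; rewrite -(limg_ker_dim (emb i) L) leq_addl.
by rewrite sum_nat_const card_ord.
Qed.

Lemma dimVL L : \dim (VL m L) = (m * \dim L)%N.
Proof.
have h1 := dimVL_le L; have h2 := dimVL_le L^C.
rewrite dimv_compl dim_rV in h2.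
have hd : (VL m L :&: VL m L^C = 0)%VS.
  apply/eqP; rewrite -subv0; apply/subvP => D; rewrite memv_cap !memVL memv0.
  move=> /andP[/forallP H1 /forallP H2]; apply/eqP/row_matrixP => i; rewrite row0.
  by apply/eqP; rewrite -memv0 -(capv_compl L) memv_cap H1 H2.
have hf : (fullv <= VL m L + VL m L^C)%VS.
  apply/subvP => D _; apply/memv_addP.
  exists (\matrix_(i < m) daddv_pi L L^C (row i D)).
    by rewrite memVL; apply/forallP => i; rewrite rowK; exact: memv_pi.
  exists (\matrix_(i < m) daddv_pi L^C L (row i D)).
    by rewrite memVL; apply/forallP => i; rewrite rowK; exact: memv_pi.
  apply/row_matrixP => i; rewrite linearD /= !rowK daddv_pi_add //.
    by rewrite capv_compl.
  by rewrite addv_complf memvf.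
have := dimv_disjoint_sum hd; have := dimvS hf; rewrite dim_M.
have := dimvS (subvf L); rewrite dim_rV.
move=> e1 e2 e3. rewrite mulnBr in h2. nia.
Qed.

End VLlemmas.

Section Dual.
Variables (F : fieldType) (m n : nat).
Implicit Types (L : {vspace 'rV[F]_n}) (C : {vspace 'M[F]_(m, n)}).

Ltac side := first [exact: tr_D | exact: tr_C | exact: tr_N | exact: dot_D | exact: dot_C | exact: dot_N].

Lemma memP C D : reflect (forall U, U \in C -> trform U D = 0) (D \in P C).
Proof. by apply: memperp => *; side. Qed.

Lemma memLp L x : reflect (forall u, u \in L -> dotf u x = 0) (x \in Lp L).
Proof. by apply: memperp => *; side. Qed.

Lemma VL_perp_sub L : (VL m (Lp L) <= P (VL m L))%VS.
Proof.
apply/subvP => D; rewrite memVL => /forallP HD.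
apply/memP => X; rewrite memVL => /forallP HX.
rewrite trformE trE big1 // => i _.
have := HD i; move/memLp => /(_ _ (HX i)).
rewrite dotfE mxE => h; rewrite -[X in _ = X]h; apply: eq_bigr => j _; by rewrite !mxE.
Qed.

Lemma dim_Lp L : \dim (Lp L) = (n - \dim L)%N.
Proof. by rewrite /Lp dim_perp ?dim_rV // => *; side. Qed.

Lemma LpK L : Lp (Lp L) = L.
Proof. by rewrite /Lp perpK // => *; side. Qed.

Lemma dim_P C : \dim (P C) = (m * n - \dim C)%N.
Proof. by rewrite /P dim_perp ?dim_M // => *; side. Qed.

Lemma PK C : P (P C) = C.
Proof. by rewrite /P perpK // => *; side. Qed.

Lemma PD C1 C2 : P (C1 + C2)%VS = (P C1 :&: P C2)%VS.
Proof. by rewrite /P perpD // => *; side. Qed.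

Lemma P_VL L : P (VL m L) = VL m (Lp L).
Proof.
apply/esym/eqP; rewrite eqEdim VL_perp_sub /= dim_P !dimVL dim_Lp mulnBr.
by [].
Qed.

Lemma identity C L :
  (\dim (P C :&: VL m L) + \dim C = m * \dim L + \dim (C :&: VL m (Lp L)))%N.
Proof.
have e1 : VL m L = P (VL m (Lp L)) by rewrite -P_VL PK.
rewrite {1}e1 -PD dim_P.
have := dimv_sum_cap C (VL m (Lp L)); rewrite dimVL dim_Lp.
have := dimvS (subvf (C + VL m (Lp L))%VS); rewrite dim_M.
have := dimvS (subvf L); rewrite dim_rV.
move=> h1 h2 h3. rewrite mulnBr in h3. nia.
Qed.

End Dual.

Section Sub.
Variables (F : fieldType) (vT : vectType F).
Implicit Types (L : {vspace vT}).

Lemma ext_dim L : (\dim L < \dim (fullv : {vspace vT}))%N ->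
  exists L', (L <= L')%VS /\ \dim L' = (\dim L).+1.
Proof.
move=> h; have : ~~ (fullv <= L)%VS.
  by apply/negP => /dimvS; rewrite leqNgt h.
case/subvPn => v _ hv; exists (L + <[v]>)%VS; split; first exact: addvSl.
have := dimv_sum_cap L <[v]>; rewrite dim_vline.
have hne : L != (L + <[v]>)%VS.
  apply/negP => /eqP e; move: hv; rewrite e; apply/negP/negPn.
  exact: (subvP (addvSr L <[v]>) _ (memv_line v)).
have := dimv_leqif_eq (addvSl L <[v]>).
case=> le1; rewrite (negPf hne) => /eqP ne.
case: (v != 0) => /= e; lia.
Qed.

Lemma hyp_dim L s : \dim L = s.+1 -> exists L0, (L0 <= L)%VS /\ \dim L0 = s.
Proof.
move=> hd; have hf := basis_free (vbasisP L).
have hs := size_tuple (vbasis L).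
case E: (tval (vbasis L)) hf hs => [|v rest]; first by rewrite hd.
rewrite free_cons => /andP[_ hfr]; rewrite hd /= => -[hsz].
exists <<rest>>%VS; split.
  apply/span_subvP => x hx; apply: vbasis_mem; change (x \in tval (vbasis L)).
  by rewrite E inE hx orbT.
by rewrite (eqnP hfr) hsz.
Qed.

Lemma exists_dim s : (s <= \dim (fullv : {vspace vT}))%N -> exists L, \dim L = s.
Proof.
elim: s => [|s IH] h; first by exists 0%VS; rewrite dimv0.
have [L hL] := IH (ltnW h).
have hlt : (\dim L < \dim (fullv : {vspace vT}))%N by rewrite hL.
have [L' [_ hL']] := ext_dim hlt.
by exists L'; rewrite hL' hL.
Qed.

End Sub.

Section DMlemmas.
Variables (F : fieldType) (m n : nat).
Implicit Types (D C : {vspace 'M[F]_(m, n)}).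

Lemma dM_predP D r k :
  reflect (exists L : {vspace 'rV[F]_n}, \dim L = k /\ (r <= \dim (D :&: VL m L))%N)
          (dM_pred D r k).
Proof. exact: asboolP. Qed.

Lemma pred_le D r k : dM_pred D r k -> (k <= n)%N.
Proof.
by case/dM_predP => L [<- _]; have := dimvS (subvf L); rewrite dim_rV.
Qed.

Lemma pred_down D c c' s : (c' <= c)%N -> dM_pred D c s -> dM_pred D c' s.
Proof.
move=> h /dM_predP [L [hL hc]]; apply/dM_predP; exists L; split => //.
exact: leq_trans h hc.
Qed.

Lemma pred_up D r s : dM_pred D r s -> (s < n)%N -> dM_pred D r s.+1.
Proof.
case/dM_predP => L [hL hr] hs.
have hlt : (\dim L < \dim (fullv : {vspace 'rV[F]_n}))%N by rewrite dim_rV hL.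
have [L' [sub hL']] := ext_dim hlt.
apply/dM_predP; exists L'; split; first by rewrite hL' hL.
apply: leq_trans hr _; apply: dimvS; apply: capvS => //; exact: VLS.
Qed.

Lemma pred_up_le D r s s' : (s <= s')%N -> (s' <= n)%N -> dM_pred D r s -> dM_pred D r s'.
Proof.
move=> h1; rewrite -(subnKC h1); elim: (s' - s)%N => [|d IH] h2 hp.
  by rewrite addn0.
rewrite addnS; apply: pred_up; last by lia.
by apply: IH => //; lia.
Qed.

Lemma dMP D r : (exists k, dM_pred D r k) ->
  dM_pred D r (dM D r) /\ forall k, dM_pred D r k -> (dM D r <= k)%N.
Proof.
move=> ex; rewrite /dM; case: pselect => [h|//]; case: ex_minnP => k hk hmin.
by split.
Qed.

Lemma dM_eqP D r t : dM_pred D r n ->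
  (dM D r = t <-> dM_pred D r t /\ (t = 0%N \/ ~~ dM_pred D r t.-1)).
Proof.
move=> hn; have [h1 h2] := dMP (ex_intro _ n hn).
split.
  move=> <-; split => //; case E: (dM D r) => [|t']; [by left | right].
  by apply/negP => hp; have := h2 _ hp; rewrite E /=; lia.
move=> [ht hor]; have le := h2 _ ht.
apply/eqP; rewrite eqn_leq le /= leqNgt; apply/negP => lt.
case: hor => [t0|hn']; first by lia.
apply: (negP hn'); apply: (pred_up_le _ _ h1); first by lia.
have := pred_le ht; lia.
Qed.

Lemma exG D s : (s <= n)%N -> exists g, forall c, dM_pred D c s = (c <= g)%N.
Proof.
move=> hs.
have ex : exists i, dM_pred D i s.
  have hs' : (s <= \dim (fullv : {vspace 'rV[F]_n}))%N by rewrite dim_rV.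
  have [L hL] := exists_dim hs'.
  by exists 0%N; apply/dM_predP; exists L.
have ub : forall i, dM_pred D i s -> (i <= \dim D)%N.
  move=> i /dM_predP [L [_ h]]; apply: leq_trans h _; apply: dimvS; exact: capvSl.
case: (ex_maxnP ex ub) => g hg hmax; exists g => c; apply/idP/idP; first exact: hmax.
by move=> hc; apply: pred_down hg.
Qed.

Lemma pred_bound D c s : dM_pred D c s -> (c <= m * s)%N.
Proof.
case/dM_predP => L [hL hc]; apply: leq_trans hc _; rewrite -hL -dimVL.
apply: dimvS; exact: capvSr.
Qed.

Lemma pred_full D c : dM_pred D c n = (c <= \dim D)%N.
Proof.
apply/idP/idP.
  case/dM_predP => L [_ h]; apply: leq_trans h _; apply: dimvS; exact: capvSl.
move=> h; apply/dM_predP; exists fullv; split; first exact: dim_rV.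
by rewrite VL_full capvf.
Qed.

Lemma pred_step D c s : dM_pred D c s.+1 -> dM_pred D (c - m) s.
Proof.
case/dM_predP => L' [hL' hc]; have [L0 [sub hL0]] := hyp_dim hL'.
apply/dM_predP; exists L0; split => //.
have h1 := dimv_sum_cap (D :&: VL m L') (VL m L0).
have h2 : (\dim (D :&: VL m L' + VL m L0) <= m * s.+1)%N.
  rewrite -hL' -dimVL; apply: dimvS; rewrite subv_add capvSr /=.
  exact: VLS.
have h3 : (\dim ((D :&: VL m L') :&: VL m L0) <= \dim (D :&: VL m L0))%N.
  by apply: dimvS; apply: capvS => //; exact: capvSl.
rewrite dimVL hL0 in h1. rewrite mulnS in h2. lia.
Qed.

Lemma dual_pred C b t x : (t <= n)%N ->
  (forall c, dM_pred C c (n - t) = (c <= x)%N) ->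
  dM_pred (P C) b t = (b + \dim C <= m * t + x)%N.
Proof.
move=> ht hx; apply/idP/idP.
  case/dM_predP => L [hL hb].
  have e := identity C L.
  have : dM_pred C (\dim (C :&: VL m (Lp L))) (n - t).
    by apply/dM_predP; exists (Lp L); rewrite dim_Lp hL.
  rewrite hx -hL => hle; apply: leq_trans (_ : _ <= \dim (P C :&: VL m L) + \dim C)%N _; first by rewrite leq_add2r.
  by rewrite e leq_add2l.
move=> hb; have : dM_pred C x (n - t) by rewrite hx.
case/dM_predP => L' [hL' hxL]; apply/dM_predP; exists (Lp L'); split.
  by rewrite dim_Lp hL'; lia.
have e := identity C (Lp L'); rewrite LpK dim_Lp hL' in e.
rewrite (_ : (n - (n - t) = t)%N) in e; last by lia.
apply: (@leq_trans (m * t + x - \dim C)%N); first by lia.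
apply: (@leq_trans (m * t + \dim (C :&: VL m L') - \dim C)%N); first by apply: leq_sub2r; rewrite leq_add2l.
by rewrite -e addnK.
Qed.

End DMlemmas.

Section Core.
Variables (F : fieldType) (m n : nat) (C : {vspace 'M[F]_(m, n)}).

Lemma predC0 c : dM_pred C c 0 = (c <= 0)%N.
Proof.
apply/idP/idP; first by move/pred_bound; rewrite muln0.
rewrite leqn0 => /eqP ->; apply/dM_predP; exists 0%VS; by rewrite dimv0.
Qed.

Lemma predPn b : dM_pred (P C) b n = (b + \dim C <= m * n)%N.
Proof.
rewrite (@dual_pred _ _ _ C b n 0) ?addn0 // => c; by rewrite subnn predC0.
Qed.

Lemma predP0 b : dM_pred (P C) b 0 = (b + \dim C <= \dim C)%N.
Proof.
rewrite (@dual_pred _ _ _ C b 0 (\dim C)) ?muln0 ?add0n // => c.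
by rewrite subn0 pred_full.
Qed.

Lemma dMP_range b : (1 <= b)%N -> (b + \dim C <= m * n)%N ->
  (1 <= dM (P C) b <= n)%N.
Proof.
move=> h1 h2; have hn : dM_pred (P C) b n by rewrite predPn.
have [hp _] := dMP (ex_intro _ n hn).
rewrite (pred_le hp) andbT lt0n; apply/negP => /eqP e.
by move: hp; rewrite e predP0; lia.
Qed.

Lemma dMC_range a : (1 <= a)%N -> (a <= \dim C)%N -> (1 <= dM C a <= n)%N.
Proof.
move=> h1 h2; have hn : dM_pred C a n by rewrite pred_full.
have [hp _] := dMP (ex_intro _ n hn).
rewrite (pred_le hp) andbT lt0n; apply/negP => /eqP e.
by move: hp; rewrite e predC0; lia.
Qed.

Lemma core t1 : (t1 < n)%N -> exists x y : nat,
  [/\ (x <= y <= x + m)%N && (y <= \dim C)%N, (x <= m * (n - t1.+1))%N,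
      (\dim C <= m * t1 + y)%N,
      (forall b, (1 <= b)%N -> (b + \dim C <= m * n)%N ->
         (dM (P C) b = t1.+1 <-> (b + \dim C <= m * t1.+1 + x)%N /\ (m * t1 + y < b + \dim C)%N)) &
      (forall a, (1 <= a)%N -> (a <= \dim C)%N ->
         (dM C a = (n - t1.+1).+1 <-> (x < a)%N /\ (a <= y)%N))].
Proof.
move=> ht; set s := (n - t1.+1)%N.
have [x hx] := exG C (leq_subr t1.+1 n : (s <= n)%N).
have hs1 : (s.+1 <= n)%N by rewrite /s; lia.
have [y hy] := exG C hs1.
have hxy : (x <= y)%N.
  rewrite -hy; apply: pred_up; [by rewrite hx | by lia].
have hyx : (y <= x + m)%N.
  have hyy : dM_pred C y s.+1 by rewrite hy.
  have := pred_step hyy; rewrite hx; lia.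
have hyk : (y <= \dim C)%N.
  rewrite -pred_full; apply: (pred_up_le hs1 (leqnn n)); by rewrite hy.
have hxb : (x <= m * s)%N by apply: (@pred_bound _ _ _ C); rewrite hx.
have hky : (\dim C <= m * t1 + y)%N.
  have hx' : forall c, dM_pred C c (n - t1) = (c <= y)%N.
    by move=> c; rewrite -hy; congr dM_pred; rewrite /s; lia.
  have := @dual_pred _ _ _ C 0 t1 y (ltnW ht) hx'; rewrite add0n => <-.
  have ht1 : (t1 <= \dim (fullv : {vspace 'rV[F]_n}))%N by rewrite dim_rV; lia.
  have [L hL] := exists_dim ht1.
  by apply/dM_predP; exists L; split.
exists x, y; split => //.
- by rewrite hxy hyx hyk.
- move=> b h1 h2; rewrite dM_eqP ?predPn //.
  have hx' : forall c, dM_pred C c (n - t1.+1) = (c <= x)%N by [].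
  have hy' : forall c, dM_pred C c (n - t1) = (c <= y)%N.
    by move=> c; rewrite -hy; congr dM_pred; rewrite /s; lia.
  rewrite (dual_pred _ _ hx') //= (dual_pred _ _ hy'); last by lia.
  split; move=> [h3 h4]; split => //.
    by case: h4 => // /negP; lia.
  by right; apply/negP; lia.
- move=> a h1 h2; rewrite dM_eqP ?pred_full // hy /=.
  split; move=> [h3 h4]; split => //.
    by case: h4 => // /negP; rewrite hx; lia.
  by right; rewrite hx; apply/negP; lia.
Qed.

End Core.

Lemma absz_pos (z : int) : (0 <= z)%R -> ((absz z)%:Z = z)%R.
Proof. by case: z. Qed.

Theorem proposition18 (F : fieldType) (m n : nat)
    (hm : (0 < m)%N) (C : {vspace 'M[F]_(m, n)}) (p : int) :
  let k : nat := \dim C in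
  let inW (j : int) := exists r : int,
      [/\ 1 <= p + r * m%:Z, p + r * m%:Z <= (m * n - k)%N%:Z &
          j = (dM (dualcode C) (absz (p + r * m%:Z)))%:Z] in
  let inWbar (j : int) := exists r : int,
      [/\ 1 <= p + k%:Z + r * m%:Z, p + k%:Z + r * m%:Z <= k%:Z &
          j = n.+1%:Z - (dM C (absz (p + k%:Z + r * m%:Z)))%:Z] in
  forall j : int,
    ((1 <= j <= n%:Z) <-> (inW j \/ inWbar j)) /\ ~ (inW j /\ inWbar j).
Proof.
move=> k inW inWbar j.
have hk : (k <= m * n)%N by rewrite /k -(dim_M F m n); apply: dimvS; apply: subvf.
have fromW : inW j -> exists t1 b, [/\ (t1 < n)%N, (1 <= b)%N && (b + k <= m * n)%N,
    dM (P C) b = t1.+1, j = t1.+1%:Z & exists r : int, b%:Z = p + r * m%:Z].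
  case=> r [h1 h2 ->]; rewrite dualcodeE.
  set b := absz (p + r * m%:Z).
  have eb : b%:Z = p + r * m%:Z by rewrite absz_pos //; lia.
  have hb1 : (1 <= b)%N by lia.
  have hb2 : (b + k <= m * n)%N by lia.
  have := dMP_range hb1 hb2; case E: (dM (P C) b) => [|t1] //= ht.
  by exists t1, b; split => //; first [lia | by rewrite hb1 hb2 | by exists r].
have fromWbar : inWbar j -> exists t1 a, [/\ (t1 < n)%N, (1 <= a)%N && (a <= k)%N,
    dM C a = (n - t1.+1).+1, j = t1.+1%:Z & exists r : int, a%:Z = p + k%:Z + r * m%:Z].
  case=> r [h1 h2 ->].
  set a := absz (p + k%:Z + r * m%:Z).
  have ea : a%:Z = p + k%:Z + r * m%:Z by rewrite absz_pos //; lia.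
  have ha1 : (1 <= a)%N by lia.
  have ha2 : (a <= k)%N by lia.
  have := dMC_range ha1 ha2; case E: (dM C a) => [|u] //= hu.
  exists (n - u.+1)%N, a; split => //; first [lia | by rewrite ha1 ha2 | by exists r | idtac].
split; last first.
  move=> [/fromW [t1 [b [ht /andP[hb1 hb2] hdb ej [r1 er1]]]] /fromWbar [t1' [a [ht' /andP[ha1 ha2] hda ej' [r2 er2]]]]].
  have et : t1' = t1 by lia.
  subst t1'.
  have [x [y [/andP [/andP [hxy hyx] hyk] hxb hky hW hWb]]] := core C ht.
  have [hw1 hw2] := (hW b hb1 hb2).1 hdb.
  have [hb3 hb4] := (hWb a ha1 ha2).1 hda.
  have hmi : (0 < m%:Z)%R by lia.
  set w := (r2 - r1 + t1.+1%:Z)%R.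
  have ew : (a%:Z - (b%:Z + k%:Z - m%:Z * t1.+1%:Z) = w * m%:Z)%R.
    rewrite er1 er2 /w; ring.
  have hlo : (0 < w * m%:Z)%R by rewrite -ew; lia.
  have hhi : (w * m%:Z < m%:Z)%R by rewrite -ew; lia.
  have [hw|hw] := lerP w 0.
    have := mulr_le0_ge0 hw (ltW hmi); lia.
  have hwq : (0 <= w - 1)%R by lia.
  have := mulr_ge0 hwq (ltW hmi).
  have -> : ((w - 1) * m%:Z = w * m%:Z - m%:Z)%R by ring.
  lia.
split.
  move=> /andP[hj1 hj2].
  have [t1 [ej ht]] : exists t1 : nat, j = t1.+1%:Z /\ (t1 < n)%N.
    have ej0 : ((absz j)%:Z = j)%R by rewrite absz_pos //; lia.
    by exists (absz j).-1; split; lia.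
  have [x [y [/andP [/andP [hxy hyx] hyk] hxb hky hW hWb]]] := core C ht.
  set z := (y%:Z - p - k%:Z)%R.
  have ez := divz_eq z m.
  have hmz : (m%:Z != 0)%R by rewrite eqz_nat -lt0n.
  have hr0 := modz_ge0 z hmz.
  have hmi : (0 < m%:Z)%R by lia.
  have hr1 := ltz_pmod z hmi.
  set q := (z %/ m)%Z in ez. set rm := (z %% m)%Z in ez hr0 hr1.
  have ec0 : (y%:Z - rm = p + k%:Z + q * m%:Z)%R.
    have ezd : (z = y%:Z - p - k%:Z)%R by [].
    lia.
  case: (lerP (y%:Z - rm) x%:Z) => hc.
    left; exists (q + t1.+1%:Z)%R.
    have eb0 : (p + (q + t1.+1%:Z) * m%:Z = (y%:Z - rm) - k%:Z + t1.+1%:Z * m%:Z)%R.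
      by rewrite ec0; ring.
    rewrite eb0.
    have hb0 : (1 <= (y%:Z - rm) - k%:Z + t1.+1%:Z * m%:Z)%R.
      have : (k%:Z <= m%:Z * t1%:Z + y%:Z)%R by lia.
      have -> : (t1.+1%:Z * m%:Z = m%:Z * t1%:Z + m%:Z)%R by rewrite -addn1 PoszD; ring.
      lia.
    set b := absz ((y%:Z - rm) - k%:Z + t1.+1%:Z * m%:Z).
    have eb : (b%:Z = (y%:Z - rm) - k%:Z + t1.+1%:Z * m%:Z)%R by rewrite absz_pos //; lia.
    have em : (t1.+1%:Z * m%:Z = (m * t1.+1)%N%:Z)%R by rewrite PoszM mulrC.
    rewrite em in eb hb0.
    have hxb' : (x <= m * (n - t1.+1))%N := hxb.
    have hb1 : (1 <= b)%N by lia.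
    have hb2 : (b + k <= m * n)%N.
      rewrite mulnBr in hxb'. have : (m * t1.+1 <= m * n)%N by rewrite leq_mul2l ht orbT.
      lia.
    have hd := (hW b hb1 hb2).2.
    rewrite em -eb; split; first by lia.
      by lia.
    rewrite dualcodeE hd; first by [].
    split; first by lia.
    rewrite mulnS in eb; lia.
  right; exists q.
  rewrite -ec0.
  have ha0 : (1 <= y%:Z - rm)%R by lia.
  set a := absz (y%:Z - rm).
  have ea : (a%:Z = y%:Z - rm)%R by rewrite absz_pos //; lia.
  have ha1 : (1 <= a)%N by lia.
  have ha2 : (a <= k)%N by lia.
  have hd := (hWb a ha1 ha2).2.
  rewrite -ea; split; [lia | lia |].
  rewrite hd; last by split; lia.
  rewrite ej; lia.
by case=> [/fromW [t1 [b [ht _ _ -> _]]] | /fromWbar [t1 [a [ht _ _ -> _]]]]; lia.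
Qed.
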